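(* Let $n,m,R$ be integers with $2\le n,m\le R$, let $V\in\mathbb{F}_q^{n\times R}$ and $W\in\mathbb{F}_q^{m\times R}$ be full-rank matrices and $C\le\mathbb{F}_q^R$ a linear code. Let $\mathcal{C}=\phi_{V,W}(C)$ be an $\mathbb{F}_q$-$[n\times m,k,d]$ code of tensor rank $R$, and suppose $\Delta^{\mathrm{trk}}(\mathcal{C})=0$. Then for every $c\in C$ of Hamming weight $d$: \begin{enumerate} \item $\dim(C_W*c)=\dim(C_V*c)=d$; \item $(C_W*c)\cap C_V^\perp=(C_V*c)\cap C_W^\perp=\{0\}$; \item $\dim\big(C_V\cap(C_W*c)^\perp\big)=n-d$; \item $\dim\big(C_W\cap(C_V*c)^\perp\big)=m-d$. \end{enumerate}
   Context: $\mathbb{F}_q$ is a finite field; $\phi_{V,W}(x)=V\,\mathrm{diag}(x)\,W^{\mathrm t}$ for $x\in\mathbb{F}_q^R$. $C_V,C_W$ are the codes spanned by the rows of $V,W$; $\perp$ is the dual w.r.t. the standard inner product; $v*w$ is the componentwise product and $C'*v=\{c*v:c\in C'\}$. An $\mathbb{F}_q$-$[n\times m,k,d]$ code is a $k$-dimensional subspace of $\mathbb{F}_q^{n\times m}$ with minimum rank $d$ of its nonzero elements. The tensor rank $\mathrm{trk}(\mathcal{C})$ is the minimum dimension of a subspace spanned by rank-one matrices containing $\mathcal{C}$, and $\Delta^{\mathrm{trk}}(\mathcal{C})=\mathrm{trk}(\mathcal{C})-(k+d-1)$. *)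

(* Defs.v *)
From HB Require Import structures.
From mathcomp Require Import all_boot all_order all_algebra all_field.
Set Implicit Arguments. Unset Strict Implicit. Unset Printing Implicit Defensive.
Import GRing.Theory.
Local Open Scope ring_scope.

(* Codes in F^R are represented (mathcomp mxalgebra style) by matrices whose
   row space is the code: a matrix A : 'M[F]_(k, R) represents the code
   spanned by its rows; x : 'rV_R is in it iff (x <= A)%MS; its dimension is
   \rank A. *)

Definition phiVW (F : fieldType) (n m R : nat)
  (V : 'M[F]_(n, R)) (W : 'M[F]_(m, R)) (x : 'rV[F]_R) : 'M[F]_(n, m) :=
  V *m diag_mx x *m W^T.

Definition hwt (F : fieldType) (R : nat) (c : 'rV[F]_R) : nat :=
  #|[set i : 'I_R | c 0 i != 0]|.

(* Dual code w.r.t. the standard inner product: {y | y . a = 0 for all rows a}.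
   Its row space is the kernel of A^T. *)
Definition dual_code (F : fieldType) (k R : nat) (A : 'M[F]_(k, R)) : 'M[F]_R :=
  kermx A^T.

(* C_A * c : generated by the componentwise products (row i of A) * c,
   hence its row space is { a * c : a in C_A }. *)
Definition cwprod (F : fieldType) (k R : nat) (A : 'M[F]_(k, R)) (c : 'rV[F]_R)
  : 'M[F]_(k, R) := \matrix_(i, j) (A i j * c 0 j).

Definition rk1_spanned (F : fieldType) (n m : nat) (S : {vspace 'M[F]_(n, m)}) :=
  exists s : seq 'M[F]_(n, m), all (fun X => \rank X == 1)%N s /\ S = <<s>>%VS.

Definition has_tensor_rank (F : fieldType) (n m : nat)
  (Cc : {vspace 'M[F]_(n, m)}) (t : nat) : Prop :=
  (exists S : {vspace 'M[F]_(n, m)},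
      [/\ rk1_spanned S, (Cc <= S)%VS & \dim S = t]) /\
  (forall S : {vspace 'M[F]_(n, m)}, rk1_spanned S -> (Cc <= S)%VS -> (t <= \dim S)%N).

Definition min_rank (F : fieldType) (n m : nat)
  (Cc : {vspace 'M[F]_(n, m)}) (d : nat) : Prop :=
  (exists2 X, X \in Cc & X != 0 /\ \rank X = d) /\
  (forall X, X \in Cc -> X != 0 -> (d <= \rank X)%N).

Definition is_rank_code (F : fieldType) (n m : nat)
  (Cc : {vspace 'M[F]_(n, m)}) (k d : nat) : Prop :=
  \dim Cc = k /\ min_rank Cc d.

(* Main.v *)
Require Import Defs.
From HB Require Import structures.
From mathcomp Require Import all_boot all_order all_algebra all_field.
Set Implicit Arguments. Unset Strict Implicit.
Import GRing.Theory.
Local Open Scope ring_scope.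

Lemma rank_diag_le (F : fieldType) (R : nat) (c : 'rV[F]_R) :
  (\rank (diag_mx c) <= hwt c)%N.
Proof.
have -> : diag_mx c = \sum_j (c 0 j *: (delta_mx j j : 'M[F]_R)).
  apply/matrixP=> a b; rewrite summxE (bigD1 a) //= big1 ?addr0.
    by rewrite !mxE eqxx /= eq_sym mulr_natr.
  by move=> j /negPf ja; rewrite !mxE eq_sym ja /= mulr0.
rewrite /hwt -sum1_card.
apply: (@leq_trans (\sum_i \rank ((c 0 i *: (delta_mx i i : 'M[F]_R))%R))%N).
  elim/big_ind2: _ => //; first by rewrite mxrank0.
  by move=> A1 k1 A2 k2 h1 h2; apply: leq_trans (mxrank_add _ _) (leq_add h1 h2).
rewrite [X in (_ <= X)%N]big_mkcond /=; apply: leq_sum => j _.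
rewrite inE; case: eqP => [->|_]; first by rewrite scale0r mxrank0.
apply: (@leq_trans (\rank (delta_mx j j : 'M[F]_R))); first exact: mxrankS (scalemx_sub _ _). by rewrite mxrank_delta.
Qed.
Definition Mi (F : fieldType) n m R (V : 'M[F]_(n, R)) (W : 'M[F]_(m, R)) (i : 'I_R)
  : 'M[F]_(n, m) := \matrix_(a, b) (V a i * W b i).

Lemma phi_sum (F : fieldType) n m R (V : 'M[F]_(n, R)) (W : 'M[F]_(m, R)) x :
  phiVW V W x = \sum_i x 0 i *: Mi V W i.
Proof.
apply/matrixP=> a b; rewrite /phiVW mul_mx_diag !mxE summxE.
by apply: eq_bigr => i _; rewrite !mxE mulrCA mulrA.
Qed.

Lemma Mi_rank (F : fieldType) n m R (V : 'M[F]_(n, R)) (W : 'M[F]_(m, R)) i :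
  (\rank (Mi V W i) <= 1)%N.
Proof.
have -> : Mi V W i = col i V *m (col i W)^T.
  by apply/matrixP=> a b; rewrite !mxE big_ord1 !mxE.
exact: leq_trans (mxrankM_maxr _ _) (rank_leq_row _).
Qed.

Lemma phi_inj (F : fieldType) n m R (V : 'M[F]_(n, R)) (W : 'M[F]_(m, R))
  (C : 'M[F]_R) (Cc : {vspace 'M[F]_(n, m)})
  (hCc : forall X : 'M[F]_(n, m),
      X \in Cc <-> exists2 x : 'rV[F]_R, (x <= C)%MS & X = phiVW V W x)
  (htrk : has_tensor_rank Cc R) x : phiVW V W x = 0 -> x = 0.
Proof.
move=> hx.
pose t := [tuple Mi V W i | i < R].
pose s := [seq X <- t | \rank X == 1%N].
have ht : forall i : 'I_R, t`_i = Mi V W i.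
  by move=> i; rewrite -tnth_nth tnth_mktuple.
have hs : rk1_spanned <<s>>%VS by exists s; split => //; apply: filter_all.
have hCs : (Cc <= <<s>>)%VS.
  apply/subvP=> X /hCc [y _ ->]; rewrite phi_sum.
  apply: memv_suml => i _; apply: memvZ.
  have := Mi_rank V W i; rewrite leq_eqVlt ltnS leqn0 mxrank_eq0.
  case/orP=> [h1|/eqP->]; last exact: mem0v.
  apply: memv_span; rewrite mem_filter h1 /=.
  by rewrite -(ht i) mem_nth // size_tuple.
have hR := htrk.2 _ hs hCs.
have hfree : free t.
  rewrite /free size_tuple eqn_leq; apply/andP; split.
    by have := dim_span t; rewrite size_tuple.
  apply: leq_trans hR _; apply: dimvS; apply: sub_span => X.
  by rewrite mem_filter => /andP[].
apply/rowP=> i; rewrite mxE.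
move: i; apply: (freeP hfree (fun i => x 0 i)).
by under eq_bigr do rewrite ht; rewrite -phi_sum.
Qed.

Theorem proposition3p11 (F : finFieldType) (n m R : nat)
  (hn : (2 <= n)%N) (hm : (2 <= m)%N) (hnR : (n <= R)%N) (hmR : (m <= R)%N)
  (V : 'M[F]_(n, R)) (W : 'M[F]_(m, R))
  (hV : \rank V = n) (hW : \rank W = m)
  (C : 'M[F]_R) (Cc : {vspace 'M[F]_(n, m)}) (k d : nat)
  (hCc : forall X : 'M[F]_(n, m),
      X \in Cc <-> exists2 x : 'rV[F]_R, (x <= C)%MS & X = phiVW V W x)
  (hcode : is_rank_code Cc k d)
  (htrk : has_tensor_rank Cc R)
  (hdelta : (R%:Z - (k%:Z + d%:Z - 1) = 0)%R) :
  forall c : 'rV[F]_R, (c <= C)%MS -> hwt c = d ->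
    [/\ \rank (cwprod W c) = d /\ \rank (cwprod V c) = d,
        ((cwprod W c :&: dual_code V)%MS == (0 : 'M[F]_R))%MS /\
        ((cwprod V c :&: dual_code W)%MS == (0 : 'M[F]_R))%MS,
        \rank (V :&: dual_code (cwprod W c))%MS = (n - d)%N &
        \rank (W :&: dual_code (cwprod V c))%MS = (m - d)%N].
Proof.
move=> c cC hc.
have dpos : (0 < d)%N.
  by case: hcode.2.1 => X _ [Xn0 <-]; rewrite lt0n mxrank_eq0.
have c0 : c != 0.
  apply/eqP=> c0; move: hc dpos; rewrite c0 /hwt.
  have -> : [set i : 'I_R | (0 : 'rV[F]_R) 0 i != 0] = set0.
    by apply/setP=> i; rewrite !inE mxE eqxx.
  by rewrite cards0 => <-.
pose D := diag_mx c.
have hphi : phiVW V W c != 0.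
  by apply/eqP=> /(phi_inj hCc htrk) /eqP; rewrite (negbTE c0).
have hmem : phiVW V W c \in Cc by apply/hCc; exists c.
have rge : (d <= \rank (phiVW V W c))%N := hcode.2.2 _ hmem hphi.
have eW : cwprod W c = W *m D by rewrite /cwprod mul_mx_diag.
have eV : cwprod V c = V *m D by rewrite /cwprod mul_mx_diag.
have rD : (\rank D <= d)%N by rewrite -hc; apply: rank_diag_le.
have ePhi : phiVW V W c = V *m (W *m D)^T.
  by rewrite /phiVW trmx_mul tr_diag_mx mulmxA.
have ePhiT : (phiVW V W c)^T = W *m (V *m D)^T.
  by rewrite /phiVW !trmx_mul trmxK tr_diag_mx mulmxA.
have rWD : \rank (W *m D) = d.
  apply/eqP; rewrite eqn_leq (leq_trans (mxrankM_maxr _ _) rD) /=.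
  by apply: (leq_trans rge); rewrite ePhi -(mxrank_tr (W *m D)); apply: mxrankM_maxr.
have rVD : \rank (V *m D) = d.
  apply/eqP; rewrite eqn_leq (leq_trans (mxrankM_maxr _ _) rD) /=.
  apply: (leq_trans rge); rewrite /phiVW; exact: mxrankM_maxl.
have rphi : \rank (phiVW V W c) = d.
  apply/eqP; rewrite eqn_leq rge andbT ePhi.
  by rewrite -rWD -(mxrank_tr (W *m D)); apply: mxrankM_maxr.
have rphiT : \rank (W *m (V *m D)^T) = d by rewrite -ePhiT mxrank_tr.
rewrite /dual_code eW eV; split.
- by [].
- rewrite !sub0mx !andbT !submx0; split.
    apply/mxrank_injP; rewrite rWD -rphi -mxrank_tr /phiVW.
    by rewrite !trmx_mul trmxK tr_diag_mx mulmxA.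
  apply/mxrank_injP; rewrite rVD -rphi.
  by [].
- have h := mxrank_mul_ker V (W *m D)^T; rewrite -ePhi rphi in h.
  by transitivity (\rank V - d)%N; [rewrite -h addKn | rewrite hV].
- have h := mxrank_mul_ker W (V *m D)^T; rewrite rphiT in h.
  by transitivity (\rank W - d)%N; [rewrite -h addKn | rewrite hW].
Qed.
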